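(* Let $n,m\ge 2$, $\phi\in(0,1]$, and let $p_M(n,m,\phi)$ be the probability that an $(n,m)$-election generated by the Mallows model with dispersion parameter $\phi$ (and any reference vote) is single-peaked. Then $$p_M(n,m,\phi)\ge\left(\frac{1+\phi(m-1)+\phi^2(m-2)(m-3)/2}{Z}\right)^n,\qquad Z=\prod_{j=1}^{m}\left(1+\phi+\cdots+\phi^{j-1}\right).$$
   Context: For total orders $V,W$ on a candidate set $C$, the Kendall tau distance $\kappa(V,W)$ is the number of unordered pairs $\{c,c'\}\subseteq C$ ordered differently by $V$ and $W$. Mallows model on a set $C$ of $m$ candidates with reference vote $V$ and dispersion $\phi\in(0,1]$: each of the $n$ votes of the election is drawn independently, a total order $W$ being chosen with probability $\phi^{\kappa(V,W)}/Z$, where $Z=\sum_{W}\phi^{\kappa(V,W)}=\prod_{j=1}^{m}(1+\phi+\cdots+\phi^{j-1})$. Given a total order $A$ on $C$, a vote contains a valley with respect to $A$ on $c_1,c_2,c_3$ if $c_2$ lies strictly between $c_1$ and $c_3$ in $A$ and the vote ranks $c_2$ below both $c_1$ and $c_3$. An election is single-peaked if there is a total order $A$ on $C$ such that no vote contains a valley with respect to $A$. *)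

(* Defs.v *)
From HB Require Import structures.
From mathcomp Require Import all_boot all_order all_algebra all_fingroup.
Set Implicit Arguments. Unset Strict Implicit. Unset Printing Implicit Defensive.
Import Order.TTheory GRing.Theory Num.Theory.

(* A total order (vote, reference vote, axis) on the
   candidates is encoded by a permutation W : {perm 'I_m}, where W c is the
   position of candidate c (position 0 = top of a vote / left end of an axis). *)

Definition kendall (m : nat) (V W : {perm 'I_m}) : nat :=
  #|[set p : 'I_m * 'I_m |
      ((p.1 < p.2)%N && ((V p.1 < V p.2)%N != (W p.1 < W p.2)%N))]|.

Definition strictly_between (m : nat) (A : {perm 'I_m}) (c1 c2 c3 : 'I_m) : bool :=
  ((A c1 < A c2)%N && (A c2 < A c3)%N) || ((A c3 < A c2)%N && (A c2 < A c1)%N).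

Definition valley (m : nat) (A W : {perm 'I_m}) (c1 c2 c3 : 'I_m) : bool :=
  strictly_between A c1 c2 c3 && (W c1 < W c2)%N && (W c3 < W c2)%N.

Definition election (n m : nat) := {ffun 'I_n -> {perm 'I_m}}.

Definition single_peaked (n m : nat) (E : election n m) : bool :=
  [exists A : {perm 'I_m},
     [forall i : 'I_n, forall c1 : 'I_m, forall c2 : 'I_m, forall c3 : 'I_m,
        ~~ valley A (E i) c1 c2 c3]].

Local Open Scope ring_scope.

Definition mallows_Z (R : pzRingType) (m : nat) (phi : R) (V : {perm 'I_m}) : R :=
  \sum_(W : {perm 'I_m}) phi ^+ kendall V W.

Definition mallows_prob (R : fieldType) (m : nat) (phi : R) (V W : {perm 'I_m}) : R :=
  phi ^+ kendall V W / mallows_Z phi V.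

Definition p_M (R : fieldType) (n m : nat) (phi : R) (V : {perm 'I_m}) : R :=
  \sum_(E : election n m | single_peaked E) \prod_(i < n) mallows_prob phi V (E i).

(* Main.v *)
Require Import Defs.
From HB Require Import structures.
From mathcomp Require Import all_boot all_order all_algebra all_fingroup zify.
Import Order.TTheory GRing.Theory Num.Theory.
Set Implicit Arguments. Unset Strict Implicit. Unset Printing Implicit Defensive.

Lemma card_sum (T : finType) (P : pred T) : #|[set x | P x]| = \sum_x (P x : nat).
Proof. by rewrite -sum1dep_card big_mkcond; apply: eq_bigr => x _; case: (P x). Qed.

Definition code m (V W : {perm 'I_m}) (c : 'I_m) : nat :=
  #|[set d | (V d < V c) && (W c < W d)]|.

Lemma kendall_code m (V W : {perm 'I_m}) : kendall V W = \sum_c code V W c.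
Proof.
rewrite /kendall card_sum.
have -> : \sum_c code V W c = \sum_c \sum_d ((V d < V c) && (W c < W d) : nat).
  by apply: eq_bigr => c _; rewrite /code card_sum.
rewrite pair_bigA /=.
set Q := fun p : 'I_m * 'I_m => ((V p.2 < V p.1) && (W p.1 < W p.2)).
have -> : \sum_p (Q p : nat) = \sum_(p : 'I_m * 'I_m) (((p.1 < p.2) && Q p) + ((p.2 < p.1) && Q p))%N.
  apply: eq_bigr => -[c d] _; rewrite /Q /=.
  case: (ltngtP c d) => [h|h|h] /=; rewrite ?andbF ?addn0 //.
  by rewrite (val_inj h) ltnn.
rewrite big_split /=.
rewrite [X in (_ + X)%N](reindex_inj (h := fun p : 'I_m * 'I_m => (p.2, p.1))); last first.
  by move=> [a b] [c d] /= [-> ->].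
rewrite -big_split /=; apply: eq_bigr => -[c d] _; rewrite /Q /=.
case: (ltngtP c d) => h //=.
have hV : (V c : nat) != V d by rewrite (inj_eq val_inj) (inj_eq perm_inj) neq_ltn h.
have hW : (W c : nat) != W d by rewrite (inj_eq val_inj) (inj_eq perm_inj) neq_ltn h.
lia.
Qed.

Lemma card_ltP (T : finType) (P : pred T) (h : T -> T) : injective h ->
  #|[set x | P (h x)]| = #|[set x | P x]|.
Proof. by move=> hi; rewrite (card_sum (fun x => P (h x))) card_sum [RHS](reindex_inj hi). Qed.

Lemma card_lt_ord m (v : nat) : v <= m -> #|[set x : 'I_m | x < v]| = v.
Proof.
move=> hv.
have -> : [set x : 'I_m | x < v] = [set widen_ord hv i | i in 'I_v].
  apply/setP => x; rewrite !inE; apply/idP/imsetP => [hx|[i _ ->]] //=.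
  by exists (Ordinal hx) => //; apply: val_inj.
rewrite card_imset ?card_ord //.
by move=> i j /(congr1 val) /= /val_inj.
Qed.

Lemma code_le m (V W : {perm 'I_m}) c : code V W c <= V c.
Proof.
rewrite /code; apply: (@leq_trans #|[set d | V d < V c]|).
  by apply: subset_leq_card; apply/subsetP => d; rewrite !inE => /andP[].
have := card_ltP (fun x : 'I_m => x < V c) (@perm_inj _ V); rewrite /= => ->.
by rewrite card_lt_ord // ltnW.
Qed.

Lemma code_alt m (V W : {perm 'I_m}) c :
  code V W c = #|[set u | (V ((W^-1)%g u) <= V c) && (W c < u)]|.
Proof.
have := card_ltP (fun d => (V d < V c) && (W c < W d)) (@perm_inj _ (W^-1)%g).
rewrite /code /= => <-.
apply: eq_card => u; rewrite !inE permKV.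
case: (ltngtP (V ((W^-1)%g u)) (V c)) => h //=.
have e : (W^-1)%g u = c by apply: (@perm_inj _ V); apply: val_inj; exact: h.
by rewrite -e permKV ltnn.
Qed.

Lemma strict_card m (U : pred 'I_m) (a b : 'I_m) : U b -> a < b ->
  #|[set u | U u && (b < u)]| < #|[set u | U u && (a < u)]|.
Proof.
move=> Ub ab; apply: proper_card; apply/properP; split.
  apply/subsetP => u; rewrite !inE => /andP[-> h] /=; exact: ltn_trans ab h.
by exists b; rewrite !inE ?Ub ?ab ?ltnn.
Qed.

Lemma code_inj m (V W W' : {perm 'I_m}) :
  (forall c, code V W c = code V W' c) -> W = W'.
Proof.
move=> hc.
case: (boolP [exists c, W c != W' c]) => [/existsP [c1 hc1] | /existsPn h]; last first.
  by apply/permP => c; move: (h c); rewrite negbK => /eqP.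
exfalso.
case: (@arg_maxnP _ c1 (fun c => W c != W' c) (fun c => nat_of_ord (V c)) hc1) => c0 hc0 hmax.
have hgt : forall j, V c0 < V j -> W j = W' j.
  move=> j hj; case: (eqVneq (W j) (W' j)) => // hne.
  by have := hmax j hne; rewrite ltnNge in hj; move=> h'; case/negP: hj.
have key : forall X Y : {perm 'I_m}, (forall j, V c0 < V j -> X j = Y j) ->
   forall u, V c0 < V ((X^-1)%g u) -> V c0 < V ((Y^-1)%g u).
  move=> X Y hXY u hu.
  have e : (Y^-1)%g u = (X^-1)%g u.
    by rewrite -{1}(permKV X u) hXY // permK.
  by rewrite e.
have hU : forall u, (V ((W^-1)%g u) <= V c0) = (V ((W'^-1)%g u) <= V c0).
  move=> u; rewrite [LHS]leqNgt [RHS]leqNgt; congr negb; apply/idP/idP.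
    exact: (key W W' hgt).
  by apply: (key W' W) => j hj; rewrite (hgt j hj).
move: (hc c0); rewrite !code_alt.
have -> : [set u | (V ((W'^-1)%g u) <= V c0) && (W' c0 < u)] =
          [set u | (V ((W^-1)%g u) <= V c0) && (W' c0 < u)].
  by apply/setP => u; rewrite !inE hU.
set U := fun u => V ((W^-1)%g u) <= V c0.
have Ua : U (W c0) by rewrite /U permK.
have Ub : U (W' c0) by rewrite /U hU permK.
case: (ltngtP (W c0) (W' c0)) => h.
- by move=> e; move: (strict_card Ub h); rewrite e ltnn.
- by move=> e; move: (strict_card Ua h); rewrite e ltnn.
- by move: hc0; rewrite (val_inj h) eqxx.
Qed.

Local Open Scope ring_scope.

Lemma sum_trunc (R : pzSemiRingType) n (phi : R) (v : nat) : (v < n.+1)%N ->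
  \sum_(j < n.+1) (if (j <= v)%N then phi ^+ j else 0) = \sum_(0 <= j < v.+1) phi ^+ j.
Proof.
move=> hv.
rewrite -(big_mkord xpredT (fun j => if (j <= v)%N then phi ^+ j else 0)).
rewrite (big_cat_nat _ (n:=v.+1)) //=.
rewrite [X in _ + X]big1_seq ?addr0.
  by apply: eq_big_nat => j /andP[_ hj]; rewrite ltnS in hj; rewrite hj.
move=> j /andP[_]; rewrite mem_index_iota => /andP[h _].
by rewrite leqNgt h.
Qed.

Lemma kendall_self m (V : {perm 'I_m}) : kendall V V = 0%N.
Proof. by apply/eqP; rewrite cards_eq0; apply/eqP/setP => p; rewrite !inE eqxx andbF. Qed.

Lemma Zm_ge1 (R : realFieldType) m (phi : R) (V : {perm 'I_m}) : 0 <= phi ->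
  1 <= mallows_Z phi V.
Proof.
move=> h0; rewrite /mallows_Z (bigD1 V) //= kendall_self expr0 lerDl.
by apply: sumr_ge0 => W _; apply: exprn_ge0.
Qed.

Lemma Zm_le (R : realFieldType) n (phi : R) (V : {perm 'I_n.+1}) : 0 <= phi ->
  mallows_Z phi V <= \prod_(1 <= j < n.+2) \sum_(0 <= k < j) phi ^+ k.
Proof.
move=> h0.
pose F := fun (c : 'I_n.+1) (j : 'I_n.+1) => if (j <= V c)%N then phi ^+ j else 0.
pose G := fun f : {ffun 'I_n.+1 -> 'I_n.+1} => \prod_c F c (f c).
pose cF := fun W : {perm 'I_n.+1} => [ffun c => (inord (code V W c) : 'I_n.+1)].
have cb : forall W c, (code V W c < n.+1)%N.
  by move=> W c; exact: (leq_ltn_trans (code_le V W c) (ltn_ord _)).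
have hG : forall W, G (cF W) = phi ^+ kendall V W.
  move=> W; rewrite kendall_code -prodrXr; apply: eq_bigr => c _.
  by rewrite /F ffunE inordK ?code_le.
have cF_inj : injective cF.
  move=> W W' e; apply: (@code_inj _ V) => c.
  have := congr1 (fun f : {ffun 'I_n.+1 -> 'I_n.+1} => nat_of_ord (f c)) e; rewrite /= !ffunE !inordK //.
have Gge0 : forall f, 0 <= G f.
  move=> f; apply: prodr_ge0 => c _; rewrite /F; case: ifP => _ //; exact: exprn_ge0.
rewrite /mallows_Z.
have -> : \sum_W phi ^+ kendall V W = \sum_(f in [set cF W | W in [set: {perm 'I_n.+1}]]) G f.
  rewrite big_imset /=; last by move=> x y _ _; apply: cF_inj.
  by apply: eq_big => [W|W _]; [rewrite inE | rewrite hG].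
apply: (@le_trans _ _ (\sum_f G f)).
  rewrite [X in _ <= X](bigID (mem [set cF W | W in [set: {perm 'I_n.+1}]])) /= lerDl.
  by apply: sumr_ge0 => f _.
rewrite /G -bigA_distr_bigA /=.
rewrite le_eqVlt; apply/orP; left; apply/eqP; rewrite /F.
under eq_bigr do rewrite sum_trunc //.
rewrite [RHS](big_add1 _ _ 0 n.+2 xpredT (fun j => \sum_(0 <= k < j) phi ^+ k)) /=.
rewrite big_mkord.
by rewrite [RHS](reindex_inj (@perm_inj _ V)).
Qed.

Local Close Scope ring_scope.

Definition gax (m x : nat) : nat :=
  if x %% 2 == 1 then m.-1 %/ 2 + x.+1 %/ 2 else m.-1 %/ 2 - x %/ 2.

Lemma gax_lt m x : x < m -> gax m x < m.
Proof. rewrite /gax; case: ifP => /eqP h; lia. Qed.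

Lemma gax_inj m x y : x < m -> y < m -> gax m x = gax m y -> x = y.
Proof. rewrite /gax; case: ifP => /eqP h1; case: ifP => /eqP h2; lia. Qed.

Lemma gax_between m x y z : x < m -> y < m -> z < m ->
  gax m y < gax m x -> gax m x < gax m z -> x.+2 <= y \/ x.+2 <= z.
Proof.
rewrite /gax; case: ifP => /eqP h1; case: ifP => /eqP h2; case: ifP => /eqP h3; lia.
Qed.

Definition gfun n (x : 'I_n.+1) : 'I_n.+1 := inord (gax n.+1 x).

Lemma gfun_val n (x : 'I_n.+1) : nat_of_ord (@gfun n x) = gax n.+1 x.
Proof. by rewrite /gfun inordK // gax_lt. Qed.

Lemma gfun_inj n : injective (@gfun n).
Proof.
move=> x y e; have := congr1 (@nat_of_ord _) e; rewrite !gfun_val => /gax_inj h.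
by apply: val_inj; apply: h.
Qed.

Definition gperm n : {perm 'I_n.+1} := perm (@gfun_inj n).

Definition near m (t : {perm 'I_m}) : bool :=
  [forall x, (t x <= x.+1) && (x <= (t x).+1)].

Definition axis n (V : {perm 'I_n.+1}) : {perm 'I_n.+1} := (V * gperm n)%g.

Definition SPA m (A W : {perm 'I_m}) : bool :=
  [forall c1, forall c2, forall c3, ~~ valley A W c1 c2 c3].

Lemma near_SP n (V t : {perm 'I_n.+1}) : near t -> SPA (axis V) (V * t)%g.
Proof.
move=> /forallP ht; apply/forallP => c1; apply/forallP => c2; apply/forallP => c3.
apply/negP; rewrite /valley /strictly_between /axis !permM !permE !gfun_val.
have := ht (V c1); have := ht (V c2); have := ht (V c3).
have l1 := ltn_ord (V c1); have l2 := ltn_ord (V c2); have l3 := ltn_ord (V c3).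
move: (V c1) (V c2) (V c3) l1 l2 l3 => x1 x2 x3 l1 l2 l3.
move=> /andP[h31 h32] /andP[h21 h22] /andP[h11 h12].
case/andP => /andP[hb w1] w3.
case/orP: hb => /andP[b1 b2].
- case: (gax_between l2 l1 l3 b1 b2) => h; lia.
- case: (gax_between l2 l3 l1 b1 b2) => h; lia.
Qed.

Definition down m (t : {perm 'I_m}) : nat := #|[set x | (t x).+1 == x]|.

Lemma kendall_near m (V t : {perm 'I_m}) : near t -> kendall V (V * t)%g <= down t.
Proof.
move=> /forallP ht.
rewrite kendall_code /down card_sum.
rewrite [X in _ <= X](reindex_inj (@perm_inj _ V)) /=.
apply: leq_sum => c _.
rewrite /code.
set S := [set d | _].
have H : forall d, d \in S -> ((V d).+1 = V c) /\ ((t (V c)).+1 = V c).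
  move=> d; rewrite inE !permM => /andP[h1 h2].
  have := ht (V c); have := ht (V d) => /andP[a1 a2] /andP[b1 b2].
  split; lia.
case: (boolP ((t (V c)).+1 == V c)) => hb /=.
  apply/card_le1_eqP => d d' hd hd'.
  apply: (@perm_inj _ V); apply: ord_inj.
  have [e1 _] := H d hd; have [e2 _] := H d' hd'; lia.
rewrite leqn0 cards_eq0; apply/eqP/setP => d; rewrite [RHS]in_set0.
apply/negbTE/negP => hd; have [_ e] := H d hd.
by rewrite e eqxx in hb.
Qed.

Definition sw n (i : nat) : {perm 'I_n.+1} := tperm (inord i) (inord i.+1).

Lemma sw_spec n i (x : 'I_n.+1) : i < n ->
  (x = i :> nat /\ sw n i x = i.+1 :> nat) \/ (x = i.+1 :> nat /\ sw n i x = i :> nat) \/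
  (x <> i :> nat /\ x <> i.+1 :> nat /\ sw n i x = x :> nat).
Proof.
move=> hi; rewrite /sw.
have ea : nat_of_ord (inord i : 'I_n.+1) = i by rewrite inordK // ltnW.
have eb : nat_of_ord (inord i.+1 : 'I_n.+1) = i.+1 by rewrite inordK.
case: tpermP => [->|->|ha hb].
- by left; rewrite ea eb.
- by right; left; rewrite ea eb.
- right; right; split; [|split] => // h.
  + by apply: ha; apply: ord_inj; rewrite ea.
  + by apply: hb; apply: ord_inj; rewrite eb.
Qed.

Lemma near_sw n i : i < n -> near (sw n i).
Proof. by move=> hi; apply/forallP => x; have := sw_spec x hi; lia. Qed.

Lemma down_sw_x n i (x : 'I_n.+1) : i < n -> ((sw n i x).+1 == x) = (x == i.+1 :> nat).
Proof. by move=> hi; have := sw_spec x hi; lia. Qed.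

Lemma down_sw n i : i < n -> down (sw n i) = 1.
Proof.
move=> hi; rewrite /down.
have -> : [set x | (sw n i x).+1 == x] = [set (inord i.+1 : 'I_n.+1)].
  apply/setP => x; rewrite !inE down_sw_x //.
  by rewrite -(inj_eq val_inj) /= inordK.
by rewrite cards1.
Qed.

Definition dsw n a b : {perm 'I_n.+1} := (sw n a * sw n b)%g.

Lemma near_dsw n a b : a.+1 < b -> b < n -> near (dsw n a b).
Proof.
move=> hab hb; apply/forallP => x; rewrite /dsw permM.
have := sw_spec x (ltn_trans (ltnW hab) hb); have := sw_spec (sw n a x) hb; lia.
Qed.

Lemma down_dsw_x n a b (x : 'I_n.+1) : a.+1 < b -> b < n ->
  (((dsw n a b) x).+1 == x) = (x == a.+1 :> nat) || (x == b.+1 :> nat).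
Proof.
move=> hab hb; rewrite /dsw permM.
have := sw_spec x (ltn_trans (ltnW hab) hb); have := sw_spec (sw n a x) hb; lia.
Qed.

Lemma down_dsw n a b : a.+1 < b -> b < n -> down (dsw n a b) = 2.
Proof.
move=> hab hb; rewrite /down.
have -> : [set x | ((dsw n a b) x).+1 == x] = [set (inord a.+1 : 'I_n.+1); inord b.+1].
  apply/setP => x; rewrite !inE down_dsw_x //.
  rewrite -!(inj_eq val_inj) /= !inordK //; lia.
rewrite cards2; suff -> : (inord a.+1 : 'I_n.+1) != inord b.+1 by [].
apply/eqP => /(congr1 val) /=; rewrite !inordK //; lia.
Qed.

Lemma card_P1 k : k <= #|[set t : {perm 'I_k.+1} | near t && (down t == 1)]|.
Proof.
apply: (@leq_trans #|[set sw k i | i : 'I_k]|).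
  rewrite card_imset ?card_ord //.
  move=> i j e; apply: ord_inj.
  have := down_sw_x (inord i.+1 : 'I_k.+1) (ltn_ord i).
  rewrite e down_sw_x // inordK ?ltnS // eqxx eqSS => /eqP; done.
apply: subset_leq_card; apply/subsetP => t /imsetP [i _ ->].
by rewrite inE near_sw // down_sw.
Qed.

Lemma card_pairs kk : #|[set p : 'I_kk * 'I_kk | p.1 < p.2]| = 'C(kk, 2).
Proof.
rewrite card_sum -(pair_bigA _ (fun a b : 'I_kk => nat_of_bool (a < b))) /=.
rewrite exchange_big /=.
rewrite -bin2_sum big_mkord; apply: eq_bigr => b _.
by rewrite -card_sum card_lt_ord // ltnW.
Qed.

Lemma card_P2 k : 'C(k.-1, 2) <= #|[set t : {perm 'I_k.+1} | near t && (down t == 2)]|.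
Proof.
set I := [set p : 'I_k.-1 * 'I_k.-1 | p.1 < p.2].
pose h := fun p : 'I_k.-1 * 'I_k.-1 => dsw k p.1 p.2.+1.
have hI : forall p, p \in I -> (p.1.+1 < p.2.+1) /\ (p.2.+1 < k).
  move=> [a b]; rewrite inE /= => hab; have := ltn_ord b; lia.
rewrite -card_pairs -/I.
rewrite -(card_in_imset (f := h)); last first.
  move=> [a b] [c d] hp hq e.
  have [h1 h2] := hI _ hp; have [h3 h4] := hI _ hq.
  simpl in h1, h2, h3, h4.
  have E : forall x : 'I_k.+1, ((h (a, b) x).+1 == x) = ((h (c, d) x).+1 == x) by move=> x; rewrite e.
  have := E (inord a.+1); have := E (inord b.+2); have := E (inord c.+1); have := E (inord d.+2).
  rewrite /h /= !down_dsw_x // !inordK; try lia.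
  move=> e1 e2 e3 e4.
  have ac : a = c :> nat by lia.
  have bd : b = d :> nat by lia.
  by rewrite (ord_inj ac) (ord_inj bd).
apply: subset_leq_card; apply/subsetP => t /imsetP [p hp ->].
have [h1 h2] := hI _ hp.
by rewrite inE near_dsw // down_dsw.
Qed.

Local Open Scope ring_scope.

Lemma prob_ge0 (R : realFieldType) m (phi : R) (V W : {perm 'I_m}) : 0 <= phi ->
  0 <= mallows_prob phi V W.
Proof.
move=> h; rewrite /mallows_prob divr_ge0 ?exprn_ge0 //.
exact: le_trans ler01 (Zm_ge1 V h).
Qed.

Lemma pM_ge (R : realFieldType) nv m (phi : R) (V A : {perm 'I_m}) : 0 <= phi ->
  (\sum_(W | SPA A W) mallows_prob phi V W) ^+ nv <= p_M nv phi V.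
Proof.
move=> h0.
pose F := fun (i : 'I_nv) (W : {perm 'I_m}) => if SPA A W then mallows_prob phi V W else 0.
have -> : (\sum_(W | SPA A W) mallows_prob phi V W) ^+ nv = \prod_(i < nv) \sum_W F i W.
  rewrite -[in LHS](card_ord nv) -prodr_const; apply: eq_bigr => i _.
  by rewrite big_mkcond.
rewrite bigA_distr_bigA /= /p_M [X in _ <= X]big_mkcond /=.
apply: ler_sum => E _.
case: (boolP [forall i, SPA A (E i)]) => hall.
  have -> : single_peaked E.
    apply/existsP; exists A; apply/forallP => i.
    by move/forallP: hall => /(_ i).
  rewrite (eq_bigr (fun i => mallows_prob phi V (E i))) //.
  by move=> i _; rewrite /F (forallP hall i).
have [i hi] : exists i, ~~ SPA A (E i).
  by apply/existsP; rewrite -negb_forall.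
rewrite (bigD1 i) //= /F (negbTE hi) mul0r.
case: ifP => _ //; apply: prodr_ge0 => j _; exact: prob_ge0.
Qed.

Lemma card_natr (R : pzSemiRingType) (T : finType) (P b : pred T) :
  (#|[set t | P t && b t]|)%:R = \sum_(t | P t) ((b t) : nat)%:R :> R.
Proof.
rewrite -natr_sum; congr (_%:R); rewrite card_sum [RHS]big_mkcond /=.
by apply: eq_bigr => t _; case: (P t).
Qed.

Lemma T_ge (R : realFieldType) k (phi : R) (V : {perm 'I_k.+1}) : 0 <= phi -> phi <= 1 ->
  1 + phi * k%:R + phi ^+ 2 * ('C(k.-1, 2))%:R <= \sum_(W | SPA (axis V) W) phi ^+ kendall V W.
Proof.
move=> h0 h1.
set P := [set t : {perm 'I_k.+1} | near t].
have step1 : \sum_(t in P) phi ^+ down t <= \sum_(W | SPA (axis V) W) phi ^+ kendall V W.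
  apply: (@le_trans _ _ (\sum_(t in P) phi ^+ kendall V (V * t)%g)).
    apply: ler_sum => t; rewrite inE => ht; apply: ler_wiXn2l => //; exact: kendall_near.
  have <- : \sum_(W in [set (V * t)%g | t in P]) phi ^+ kendall V W = \sum_(t in P) phi ^+ kendall V (V * t)%g.
    by apply: big_imset => x y _ _; apply: mulgI.
  rewrite [X in _ <= X]big_mkcond [X in X <= _]big_mkcond /=.
  apply: ler_sum => W _; case: ifP => hW.
    by case/imsetP: hW => t; rewrite inE => ht ->; rewrite near_SP.
  by case: ifP => _ //; apply: exprn_ge0.
apply: le_trans step1.
have hs : forall jj : nat, (#|[set t : {perm 'I_k.+1} | near t && (down t == jj)]|)%:R = \sum_(t in P) ((down t == jj) : nat)%:R :> R.
  move=> jj; apply: etrans (card_natr _ (fun t => near t) (fun t => down t == jj)) _.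
  by apply: eq_bigl => t; rewrite inE.
apply: (@le_trans _ _ (#|[set t : {perm 'I_k.+1} | near t && (down t == 0%N)]|%:R + #|[set t : {perm 'I_k.+1} | near t && (down t == 1%N)]|%:R * phi + #|[set t : {perm 'I_k.+1} | near t && (down t == 2%N)]|%:R * phi ^+ 2)).
  rewrite -addrA -addrA lerD //.
    rewrite ler1n; apply/card_gt0P; exists 1%g; rewrite inE.
    apply/andP; split.
      by apply/forallP => x; rewrite perm1; apply/andP; split.
    rewrite /down cards_eq0; apply/eqP/setP => x; rewrite inE in_set0 perm1; lia.
  rewrite lerD //.
    by rewrite mulrC; apply: ler_wpM2r => //; rewrite ler_nat card_P1.
  by rewrite mulrC; apply: ler_wpM2r; [apply: exprn_ge0 | rewrite ler_nat card_P2].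
rewrite !hs !mulr_suml -!big_split /=.
apply: ler_sum => t _.
case: (down t) => [|[|[|d]]] /=; rewrite ?mulr0n ?mulr1n ?mul0r ?mul1r ?addr0 ?add0r ?expr0 //.
by apply: exprn_ge0.
Qed.

Lemma bin2_dbl j : (j * j.-1 = 'C(j, 2) * 2)%N.
Proof. elim: j => // j IH; rewrite binS bin1 /=; case: j IH => //= j IH; nia. Qed.

Unset Implicit Arguments.

Theorem mainTheorem12 (R : realFieldType) (n m : nat) (phi : R)
    (hn : (2 <= n)%N) (hm : (2 <= m)%N) (hphi0 : 0 < phi) (hphi1 : phi <= 1)
    (V : {perm 'I_m}) :
  let Z := \prod_(1 <= j < m.+1) \sum_(0 <= k < j) phi ^+ k in
  ((1 + phi * (m - 1)%:R + phi ^+ 2 * ((m - 2) * (m - 3))%:R / 2) / Z) ^+ n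
    <= p_M n phi V.
Proof.
case: m hm V => [|k] hm V //; cbv zeta.
set Z := \prod_(1 <= j < k.+2) _.
have h0 : 0 <= phi := ltW hphi0.
apply: le_trans (pM_ge n V (axis V) h0).
have eS : 1 + phi * (k.+1 - 1)%:R + phi ^+ 2 * ((k.+1 - 2) * (k.+1 - 3))%:R / 2
        = 1 + phi * k%:R + phi ^+ 2 * ('C(k.-1, 2))%:R.
  have -> : (k.+1 - 1 = k)%N by lia.
  have -> : ((k.+1 - 2) * (k.+1 - 3) = 'C(k.-1, 2) * 2)%N.
    rewrite -bin2_dbl; congr (_ * _)%N; lia.
  by rewrite natrM mulrA mulfK // pnatr_eq0.
rewrite eS.
set S := 1 + phi * k%:R + phi ^+ 2 * ('C(k.-1, 2))%:R.
have S0 : 0 <= S by rewrite /S !addr_ge0 ?mulr_ge0 ?exprn_ge0.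
have Zm1 := Zm_ge1 V h0.
have ZmZ : mallows_Z phi V <= Z := Zm_le V h0.
have Zm0 : 0 < mallows_Z phi V by apply: lt_le_trans Zm1; exact: ltr01.
have Z0 : 0 < Z by apply: lt_le_trans ZmZ.
apply: lerXn2r.
- by rewrite nnegrE divr_ge0 // ltW.
- by rewrite nnegrE; apply: sumr_ge0 => W _; apply: prob_ge0.
have -> : \sum_(W | SPA (axis V) W) mallows_prob phi V W =
          (\sum_(W | SPA (axis V) W) phi ^+ kendall V W) / mallows_Z phi V.
  by rewrite mulr_suml.
apply: (@le_trans _ _ (S / mallows_Z phi V)).
  by apply: ler_wpM2l => //; rewrite lef_pV2.
by apply: ler_wpM2r; [rewrite invr_ge0 ltW | apply: T_ge].
Qed.
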